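(* Let $r\in\{2,3\}$, let $(\mathbf{a}_1,\mathbf{a}_2,\mathbf{a}_3)$ be $f$-tuples with entries in $\{0,\dots,p-1\}$ which are weakly generic, let $\tau$ be the corresponding non-principal-series tame type for $I_K$ and $(s_j)_{j=0}^{f-1}\in S_3^f$ an orientation of $(\mathbf{a}_1,\mathbf{a}_2,\mathbf{a}_3)$. For $0\le j\le f-1$ and $0\le i\le r-1$ define $s'_{j+if}=s_\tau^{\,i+1}\circ s_j\in S_3$, where $s_\tau=(23)$ if $r=2$ and $s_\tau=(123)$ if $r=3$. Then $(s'_{j'})_{j'=0}^{f'-1}\in S_3^{f'}$ is an orientation of $\tau'$.
   Context: $p>3$; $K=\mathbb{Q}_{p^f}$, $f'=fr$, $K'=\mathbb{Q}_{p^{f'}}$. $\omega_{f'}$ is a fundamental character of niveau $f'$ of $I_{K'}$ (viewed in $\mathcal{O}^\times$). For an $m$-tuple $\mathbf{b}=(b_i)_{i\in\mathbb{Z}/m}$ put $\mathbf{b}^{(j)}=\sum_{i=0}^{m-1}b_{-j+i}p^i$. The triple $(\mathbf{a}_1,\mathbf{a}_2,\mathbf{a}_3)$ is weakly generic if $3\le|a_{k,j}-a_{l,j}|\le p-4$ for all $k\ne l$, all $j$. The type $\tau$ is $\omega_{f'}^{-\mathbf{a}_1^{(0)}-p^f\mathbf{a}_1^{(0)}}\oplus\omega_{f'}^{-\mathbf{a}_2^{(0)}-p^f\mathbf{a}_3^{(0)}}\oplus\omega_{f'}^{-\mathbf{a}_3^{(0)}-p^f\mathbf{a}_2^{(0)}}$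 if $r=2$, and $\omega_{f'}^{-\mathbf{a}_1^{(0)}-p^f\mathbf{a}_2^{(0)}-p^{2f}\mathbf{a}_3^{(0)}}\oplus\omega_{f'}^{-\mathbf{a}_2^{(0)}-p^f\mathbf{a}_3^{(0)}-p^{2f}\mathbf{a}_1^{(0)}}\oplus\omega_{f'}^{-\mathbf{a}_3^{(0)}-p^f\mathbf{a}_1^{(0)}-p^{2f}\mathbf{a}_2^{(0)}}$ if $r=3$. Its restriction $\tau'$ to $I_{K'}$ is written uniquely as $\eta_1\oplus\eta_2\oplus\eta_3$ (in this order) with $\eta_k=\omega_{f'}^{-\mathbf{a}'^{(0)}_k}$ for $f'$-tuples $\mathbf{a}'_k$ with entries in $[0,p-1]$; an orientation of $\tau'$ means an orientation of $(\mathbf{a}'_1,\mathbf{a}'_2,\mathbf{a}'_3)$. An orientation of a triple of $m$-tuples $(\mathbf{b}_1,\mathbf{b}_2,\mathbf{b}_3)$ is $(t_j)\in S_3^m$ with $\mathbf{b}^{(j)}_{t_j(1)}\ge\mathbf{b}^{(j)}_{t_j(2)}\ge\mathbf{b}^{(j)}_{t_j(3)}$ for all $j$. Permutations compose right to left and $(123)$ is $1\mapsto2\mapsto3\mapsto1$. *)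

(* Defs.v *)
From mathcomp Require Import all_boot all_fingroup.
Set Implicit Arguments. Unset Strict Implicit. Unset Printing Implicit Defensive.
Local Open Scope group_scope.

(* Tuples b = (b_i)_{i in Z/m} are represented as b : nat -> nat, read at
   indices i %% m.  The paper's labels 1,2,3 are the ordinals 0,1,2 of 'I_3. *)

Definition bpow (p m : nat) (b : nat -> nat) (j : nat) : nat :=
  (\sum_(i < m) b ((i + (m - j %% m)) %% m) * p ^ i)%N.

Definition is_orientation (p m : nat) (B : 'I_3 -> nat -> nat)
    (t : nat -> {perm 'I_3}) : Prop :=
  forall j, (j < m)%N ->
    (bpow p m (B (t j ord0)) j >= bpow p m (B (t j (inord 1))) j)%N /\
    (bpow p m (B (t j (inord 1))) j >= bpow p m (B (t j (inord 2))) j)%N.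

Definition absdiff (x y : nat) : nat := (maxn x y - minn x y)%N.

Definition weakly_generic (p f : nat) (A : 'I_3 -> nat -> nat) : Prop :=
  forall (k l : 'I_3), k != l -> forall j, (j < f)%N ->
    (3 <= absdiff (A k j) (A l j) <= p - 4)%N.

(* exponent n_k with tau' = omega_{f'}^{-n_1} + omega_{f'}^{-n_2} + omega_{f'}^{-n_3} *)
Definition tau_exp (p f r : nat) (A : 'I_3 -> nat -> nat) (k : 'I_3) : nat :=
  let a := fun l : nat => bpow p f (A (inord l)) 0 in
  if r == 2 then
    match nat_of_ord k with
    | 0 => a 0 + p ^ f * a 0
    | 1 => a 1 + p ^ f * a 2
    | _ => a 2 + p ^ f * a 1
    end%N
  else
    match nat_of_ord k with
    | 0 => a 0 + p ^ f * a 1 + p ^ (2 * f) * a 2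
    | 1 => a 1 + p ^ f * a 2 + p ^ (2 * f) * a 0
    | _ => a 2 + p ^ f * a 0 + p ^ (2 * f) * a 1
    end%N.

(* a'_k: the f'-tuple of base-p digits of n_k, so that a'^{(0)}_k = n_k *)
Definition aprime (p f r : nat) (A : 'I_3 -> nat -> nat) (k : 'I_3) : nat -> nat :=
  fun i => ((tau_exp p f r A k %/ p ^ (i %% (f * r))) %% p)%N.

(* the 3-cycle (123): 1 -> 2 -> 3 -> 1, i.e. i |-> i+1 mod 3 on 'I_3 *)
Definition cyc123 : {perm 'I_3} := perm (@ordS_inj 3).
Definition swap23 : {perm 'I_3} := tperm (inord 1) (inord 2).
Definition s_tau (r : nat) : {perm 'I_3} := if r == 2 then swap23 else cyc123.

(* s'_{j+if} = s_tau^{i+1} o s_j.  In MathComp, (s * t) x = t (s x), so the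
   composite "s_tau^{i+1} after s_j" is s_j * s_tau ^+ i.+1. *)
Definition s_prime (f r : nat) (s : nat -> {perm 'I_3}) (j' : nat) : {perm 'I_3} :=
  s (j' %% f)%N * s_tau r ^+ (j' %/ f).+1.

(* Main.v *)
Require Import Defs.
From mathcomp Require Import all_boot all_fingroup.
From mathcomp Require Import zify.

Definition dig (p n e : nat) := (n %/ p ^ e) %% p.

Lemma dig_split p f x y e : 0 < p -> x < p ^ f ->
  dig p (x + p ^ f * y) e = if e < f then dig p x e else dig p y (e - f).
Proof.
move=> p0 xlt; rewrite /dig; case: ltnP => He.
- have -> : p ^ f = p ^ e * p ^ (f - e) by rewrite -expnD subnKC // ltnW.
  rewrite addnC -mulnA mulnC divnMDl ?expn_gt0 ?p0 //.
  have -> : p ^ (f - e) = p * p ^ (f - e).-1 by rewrite -expnS prednK // subn_gt0.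
  by rewrite -mulnA [p * _]mulnC modnMDl.
- have -> : p ^ e = p ^ f * p ^ (e - f) by rewrite -expnD subnKC.
  rewrite divnMA addnC mulnC divnMDl ?expn_gt0 ?p0 // (divn_small xlt) addn0 //.
Qed.

Lemma sum_lt p n (g : nat -> nat) : (forall i, i < n -> g i < p) ->
  \sum_(i < n) g i * p ^ i < p ^ n.
Proof.
elim: n => [|n IH] H; first by rewrite big_ord0.
rewrite big_ord_recr /= expnS.
have h1 := IH (fun i hi => H i (ltnW hi)).
have h2 := H n (ltnSn n).
set S := \sum_(i < n) _ in h1 *. set P := p ^ n in h1 *. nia.
Qed.

Lemma sum_cmp p n (g h : nat -> nat) : (forall i, i < n -> g i < p) ->
  g n < h n -> \sum_(i < n.+1) g i * p ^ i < \sum_(i < n.+1) h i * p ^ i.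
Proof.
move=> H lt; rewrite !big_ord_recr /=.
have h1 := @sum_lt p n g H.
set S := \sum_(i < n) g i * _ in h1 *. set T := \sum_(i < n) h i * _.
set P := p ^ n in h1 *. nia.
Qed.

Lemma bpow_cmp p m (b c : nat -> nat) j : 0 < m -> j < m ->
  (forall i, i < m -> b i < p) -> b (m.-1 - j) < c (m.-1 - j) ->
  bpow p m b j < bpow p m c j.
Proof.
move=> m0 jm Hb lt; rewrite /bpow (modn_small jm).
case: m m0 jm Hb lt => // n _ jm Hb lt.
apply: (@sum_cmp p n (fun i => b ((i + (n.+1 - j)) %% n.+1)) (fun i => c ((i + (n.+1 - j)) %% n.+1))) => [i _|] /=; first by apply: Hb; rewrite ltn_mod.
have -> : (n + (n.+1 - j)) %% n.+1 = n - j.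
  have -> : n + (n.+1 - j) = (n - j) + n.+1 by lia.
  by rewrite modnDr modn_small //; lia.
exact: lt.
Qed.

Lemma bpow0_dig p f (b : nat -> nat) e : 0 < p -> (forall i, i < f -> b i < p) ->
  e < f -> dig p (bpow p f b 0) e = b e.
Proof.
move=> p0 Hb ef.
have -> : bpow p f b 0 = \sum_(i < f) b i * p ^ i.
  rewrite /bpow mod0n subn0; apply: eq_bigr => i _.
  by rewrite modnDr modn_small.
elim: f Hb ef => // n IH Hb ef.
rewrite big_ord_recr /= mulnC dig_split //; last by apply: sum_lt => i hi; apply: Hb; lia.
case: ltnP => h; first by apply: IH => // i hi; apply: Hb; lia.
have -> : e = n by lia.
by rewrite subnn /dig expn0 divn1 modn_small // Hb.
Qed.

Lemma bpow0_lt p f (b : nat -> nat) : (forall i, i < f -> b i < p) -> bpow p f b 0 < p ^ f.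
Proof.
move=> Hb.
have -> : bpow p f b 0 = \sum_(i < f) b i * p ^ i.
  rewrite /bpow mod0n subn0; apply: eq_bigr => i _.
  by rewrite modnDr modn_small.
exact: sum_lt.
Qed.

Lemma dig_lo p f x y e : 0 < p -> x < p ^ f -> e < f ->
  dig p (x + p ^ f * y) e = dig p x e.
Proof. by move=> p0 xl ef; rewrite dig_split // ef. Qed.

Lemma dig_hi p f x y e : 0 < p -> x < p ^ f ->
  dig p (x + p ^ f * y) (f + e) = dig p y e.
Proof.
move=> p0 xl; rewrite dig_split // ifF; last by apply/negbTE; rewrite -leqNgt leq_addr.
by rewrite addKn.
Qed.

Definition part (r : nat) (k : 'I_3) (q : nat) : 'I_3 :=
  inord (if r == 2 then (if q == 0 then nat_of_ord k else (if nat_of_ord k == 0 then 0 else 3 - k))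
         else (k + q) %% 3).

Lemma tau_dig p f r A k q e : 0 < p -> (r == 2) || (r == 3) -> q < r -> e < f ->
  (forall (k : 'I_3) j, j < f -> A k j < p) ->
  dig p (tau_exp p f r A k) (q * f + e) = A (part r k q) e.
Proof.
move=> p0 hr qr ef HA.
have Hb : forall l : nat, bpow p f (A (inord l)) 0 < p ^ f.
  by move=> l; apply: bpow0_lt => i hi; apply: HA.
have Hd : forall l : 'I_3, dig p (bpow p f (A l) 0) e = A l e.
  by move=> l; apply: bpow0_dig => // i hi; apply: HA.
case/orP: hr => /eqP ?; subst r.
- rewrite /tau_exp /part /=.
  move: qr; case: q => [|[|q]] qr //; rewrite ?mul0n ?mul1n ?add0n.
  + by case: k => [[|[|[|//]]] hk] /=; rewrite dig_lo.
  + by case: k => [[|[|[|//]]] hk] /=; rewrite dig_hi.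
- have E : forall x y z, x + p ^ f * y + p ^ (2 * f) * z = x + p ^ f * (y + p ^ f * z).
    by move=> x y z; rewrite mulnDr mulnA -expnD addnn -mul2n addnA.
  rewrite /tau_exp /part /=.
  move: qr; case: q => [|[|[|q]]] qr //; rewrite ?mul0n ?mul1n ?add0n.
  + by case: k => [[|[|[|//]]] hk] /=; rewrite E dig_lo.
  + by case: k => [[|[|[|//]]] hk] /=; rewrite E dig_hi // dig_lo.
  + have E2 : 2 * f + e = f + (f + e) by lia.
    by case: k => [[|[|[|//]]] hk] /=; rewrite E E2 dig_hi // dig_hi.
Qed.

Lemma cyc_pow n (y : 'I_3) : nat_of_ord ((cyc123 ^+ n)%g y) = (y + n) %% 3.
Proof.
elim: n => [|n IH]; first by rewrite expg0 perm1 addn0 modn_small.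
by rewrite expgSr permM /cyc123 permE /= IH -addn1 modnDml -addnA addn1.

Qed.

Lemma part_perm r i (y : 'I_3) : (r == 2) || (r == 3) -> i < r ->
  part r ((s_tau r ^+ i.+1)%g y) (r.-1 - i) = y.
Proof.
case/orP => /eqP ?; subst r => ir; apply/val_inj.
- rewrite /part /s_tau /=.
  case: i ir => [|[|//]] _ /=.
  + rewrite expg1 /swap23; case: tpermP => [->|->|h1 h2].
    * by rewrite !inordK.
    * by rewrite !inordK.
    * have : nat_of_ord y = 0.
        case: y h1 h2 => [[|[|[|//]]] hy] //= h1 h2; [case: h1 | case: h2];
          by apply/val_inj; rewrite /= inordK.
      by move=> ->; rewrite inordK.
  + rewrite expgS expg1 tperm2 perm1 inordK //.
- rewrite /part /s_tau /= inordK ?ltn_mod // cyc_pow modnDml.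
  have -> : y + i.+1 + (2 - i) = y + 3 by lia.
  by rewrite modnDr modn_small.
Qed.

Lemma key p f r A s j' (x : 'I_3) : 0 < p -> 0 < f -> (r == 2) || (r == 3) ->
  (forall (k : 'I_3) j, j < f -> A k j < p) -> j' < f * r ->
  aprime p f r A (s_prime f r s j' x) ((f * r).-1 - j') =
  A (s (j' %% f) x) (f.-1 - j' %% f).
Proof.
move=> p0 f0 hr HA hj.
have ir : j' %/ f < r by rewrite ltn_divLR // mulnC.
have jf : j' %% f < f by rewrite ltn_mod.
have Ed : (f * r).-1 - j' = (r.-1 - j' %/ f) * f + (f.-1 - j' %% f).
  have E := divn_eq j' f. move: (j' %/ f) (j' %% f) E ir jf hj => i j E ir jf hj.
  subst j'. case/orP: hr => /eqP ?; subst r; nia.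
have dlt : (f * r).-1 - j' < f * r by lia.
have r0 : 0 < r by case/orP: hr => /eqP ->.
have ri : r.-1 - j' %/ f < r by rewrite (leq_ltn_trans (leq_subr _ _)) // ltn_predL.
rewrite /aprime (modn_small dlt) -/(dig p _ _) Ed tau_dig //; last by lia.
by rewrite /s_prime permM part_perm.
Qed.

Lemma step p f r (A : 'I_3 -> nat -> nat) (s : nat -> {perm 'I_3}) j' (x y : 'I_3) : 0 < p -> 0 < f -> (r == 2) || (r == 3) ->
  (forall (k : 'I_3) j, j < f -> A k j < p) -> weakly_generic p f A ->
  j' < f * r -> x != y ->
  bpow p f (A (s (j' %% f) y)) (j' %% f) <= bpow p f (A (s (j' %% f) x)) (j' %% f) ->
  bpow p (f * r) (aprime p f r A (s_prime f r s j' y)) j' <=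
  bpow p (f * r) (aprime p f r A (s_prime f r s j' x)) j'.
Proof.
move=> p0 f0 hr HA HG hj xy hle.
have jf : j' %% f < f by rewrite ltn_mod.
have r0 : 0 < r by case/orP: hr => /eqP ->.
have fr0 : 0 < f * r by rewrite muln_gt0 f0.
apply: ltnW; apply: bpow_cmp => //.
  by move=> i _; rewrite /aprime ltn_mod.
rewrite !key //.
set j := j' %% f in jf hle *.
have ef : f.-1 - j < f by lia.
have Hneq : s j x != s j y by rewrite (inj_eq perm_inj).
have := HG _ _ Hneq _ ef.
case: (ltngtP (A (s j y) (f.-1 - j)) (A (s j x) (f.-1 - j))) => // h.
- have := @bpow_cmp p f (A (s j x)) (A (s j y)) j f0 jf (fun i hi => HA _ _ hi) h.
  by rewrite ltnNge hle.
- by rewrite h /absdiff maxnn minnn subnn.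
Qed.

Theorem proposition6p1 (p f r : nat) (A : 'I_3 -> nat -> nat)
    (s : nat -> {perm 'I_3}) :
  prime p -> (3 < p)%N -> (0 < f)%N -> ((r == 2) || (r == 3)) ->
  (forall (k : 'I_3) j, (j < f)%N -> (A k j < p)%N) ->
  weakly_generic p f A ->
  is_orientation p f A s ->
  is_orientation p (f * r) (aprime p f r A) (s_prime f r s).
Proof.
move=> pp p3 f0 hr HA HG HO j' hj.
have p0 : 0 < p by lia.
have jf : j' %% f < f by rewrite ltn_mod.
have [h1 h2] := HO _ jf.
split; apply: step => //.
- by rewrite -(inj_eq val_inj) /= inordK.
- by rewrite -(inj_eq val_inj) /= !inordK.
Qed.
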